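(* The Banach space $Y$ (the predual of $\mathcal{F}(\mathcal{M})$ described in the context) is almost square: for every finite family $f_1,\dots,f_N\in S_Y$ and every $\varepsilon>0$ there exists $g\in S_Y$ with $\|f_i\pm g\|\le 1+\varepsilon$ for all $i=1,\dots,N$.
   Context: For a pointed metric space $M$, ${\mathrm{Lip}}_0(M)$ is the space of real Lipschitz functions vanishing at the base point, normed by the Lipschitz constant $\|\cdot\|_L$. A function $f$ on a metric space is locally flat if $\lim_{x,y\to z}\frac{f(x)-f(y)}{d(x,y)}=0$ for every $z$. Let $p=(0,0)$, $q=(1,0)$, $S_n=\{(2^{-n}k,2^{-n}):k=0,\dots,2^n\}$ for $n\in\mathbb{N}$, and $\mathcal{M}=\{p,q\}\cup\bigcup_n S_n$ with the metric $d((x_1,y_1),(x_2,y_2))=|x_1-x_2|$ if $y_1=y_2$ and $=|y_1-y_2|+\min\{x_1+x_2,2-(x_1+x_2)\}$ if $y_1\neq y_2$, base point $p$. Let $V=\{(x,y)\in\mathcal{M}:x\in\{0,1\}\}$, $h(x,y)=x$, and $Y=\{f\in{\mathrm{Lip}}_0(\mathcal{M}):\lim_n\|(f-f(q)h)|_{S_n}\|_L=0,\ f|_V\text{ locally flat}\}$ with the Lipschitz norm. *)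

(* Defs.v *)
From Stdlib Require Import Reals Lra.
From Coquelicot Require Import Coquelicot.
Open Scope R_scope.

Definition pt := (R * R)%type.

Definition dM (a b : pt) : R :=
  let (x1, y1) := a in let (x2, y2) := b in
  if Req_EM_T y1 y2 then Rabs (x1 - x2)
  else Rabs (y1 - y2) + Rmin (x1 + x2) (2 - (x1 + x2)).

Definition p0 : pt := (0, 0).
Definition q0 : pt := (1, 0).

Definition Sn (n : nat) (a : pt) : Prop :=
  exists k : nat, (k <= 2 ^ n)%nat /\ a = (INR k / 2 ^ n, / 2 ^ n).

Definition inM (a : pt) : Prop :=
  a = p0 \/ a = q0 \/ exists n : nat, (1 <= n)%nat /\ Sn n a.

Definition inV (a : pt) : Prop := inM a /\ (fst a = 0 \/ fst a = 1).

Definition hfun (a : pt) : R := fst a.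

Definition lipnorm (A : pt -> Prop) (f : pt -> R) : Rbar :=
  Lub_Rbar (fun r => exists a b, A a /\ A b /\ a <> b /\
                       r = Rabs (f a - f b) / dM a b).

Definition locally_flat (A : pt -> Prop) (f : pt -> R) : Prop :=
  forall z, A z -> forall eps, 0 < eps -> exists delta, 0 < delta /\
    forall a b, A a -> A b -> a <> b -> dM a z < delta -> dM b z < delta ->
      Rabs ((f a - f b) / dM a b) <= eps.

Definition inLip0 (f : pt -> R) : Prop :=
  f p0 = 0 /\ Rbar_lt (lipnorm inM f) p_infty.

Definition inY (f : pt -> R) : Prop :=
  inLip0 f /\
  is_lim_seq (fun n => real (lipnorm (Sn n) (fun a => f a - f q0 * hfun a))) 0 /\
  locally_flat inV f.

(* Main.v *)
Require Import Defs.
From Stdlib Require Import ZArith Reals Lra Lia.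
From Coquelicot Require Import Coquelicot.
Open Scope R_scope.

Lemma p2_pos n : 0 < 2 ^ n.
Proof. apply pow_lt; lra. Qed.
Lemma inv2_pos n : 0 < / 2 ^ n.
Proof. apply Rinv_0_lt_compat, p2_pos. Qed.
Lemma inv2_S n : / 2 ^ S n = / 2 ^ n / 2.
Proof. simpl. rewrite Rinv_mult. unfold Rdiv. ring. Qed.
Lemma inv2_le1 n : / 2 ^ n <= 1.
Proof. rewrite <- Rinv_1. apply Rinv_le_contravar; [lra|]. apply pow_R1_Rle; lra. Qed.
Lemma inv2_mono k n : (k <= n)%nat -> / 2 ^ n <= / 2 ^ k.
Proof. intros. apply Rinv_le_contravar; [apply p2_pos|]. apply Rle_pow; [lra|auto]. Qed.

Lemma dy_ge k m : k <> m -> / 2 ^ S m <= Rabs (/ 2 ^ m - / 2 ^ k).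
Proof.
  intros H. rewrite inv2_S. pose proof (inv2_pos m).
  destruct (Nat.lt_gt_cases k m) as [[Hl|Hl] _]; [exact H| |].
  - pose proof (inv2_mono (S k) m Hl). rewrite inv2_S in H1.
    rewrite Rabs_left1; lra.
  - pose proof (inv2_mono (S m) k Hl). rewrite inv2_S in H1.
    rewrite Rabs_right; lra.
Qed.

Lemma inv2_inj k m : / 2 ^ k = / 2 ^ m -> k = m.
Proof.
  intros H. destruct (Nat.eq_dec k m); auto.
  pose proof (dy_ge k m n). rewrite H, Rminus_diag, Rabs_R0 in H0.
  pose proof (inv2_pos (S m)). lra.
Qed.

Lemma Sn_coord n a : Sn n a -> 0 <= fst a <= 1 /\ snd a = / 2 ^ n.
Proof.
  intros [k [Hk ->]]. simpl. split; [|reflexivity].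
  apply le_INR in Hk. rewrite pow_INR in Hk.
  replace (INR 2) with 2 in Hk by (simpl; lra).
  pose proof (p2_pos n). pose proof (pos_INR k).
  split.
  - unfold Rdiv. apply Rmult_le_pos; [lra|]. left; apply Rinv_0_lt_compat; lra.
  - apply Rle_div_l; lra.
Qed.

Lemma M_coord a : inM a -> 0 <= fst a <= 1 /\ 0 <= snd a <= 1.
Proof.
  intros [->|[->|[n [Hn HS]]]]; simpl; try lra.
  apply Sn_coord in HS. destruct HS as [H1 ->]. split; auto.
  split; [left; apply inv2_pos| apply inv2_le1].
Qed.

Lemma dM_eq a b : snd a = snd b -> dM a b = Rabs (fst a - fst b).
Proof. destruct a, b; simpl; intros; destruct Req_EM_T; [reflexivity|contradiction]. Qed.
Lemma dM_ne a b : snd a <> snd b ->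
  dM a b = Rabs (snd a - snd b) + Rmin (fst a + fst b) (2 - (fst a + fst b)).
Proof. destruct a, b; simpl; intros; destruct Req_EM_T; [contradiction|reflexivity]. Qed.

Lemma dM_sym a b : dM a b = dM b a.
Proof.
  destruct (Req_EM_T (snd a) (snd b)).
  - rewrite !dM_eq; auto. apply Rabs_minus_sym.
  - rewrite !dM_ne; auto. rewrite Rabs_minus_sym. f_equal. f_equal; ring.
Qed.

Lemma dM_ge_dy a b : inM a -> inM b -> Rabs (snd a - snd b) <= dM a b.
Proof.
  intros Ha Hb. apply M_coord in Ha. apply M_coord in Hb.
  destruct (Req_EM_T (snd a) (snd b)).
  - rewrite dM_eq; auto. rewrite e, Rminus_diag, Rabs_R0. apply Rabs_pos.
  - rewrite dM_ne; auto. assert (0 <= Rmin (fst a + fst b) (2 - (fst a + fst b))).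
    apply Rmin_glb; lra. lra.
Qed.

Lemma dM_pos a b : inM a -> inM b -> a <> b -> 0 < dM a b.
Proof.
  intros Ha Hb Hab. destruct (Req_EM_T (snd a) (snd b)).
  - rewrite dM_eq; auto. apply Rabs_pos_lt. intro H. apply Hab.
    destruct a, b; simpl in *. f_equal; lra.
  - eapply Rlt_le_trans; [|apply dM_ge_dy; auto]. apply Rabs_pos_lt. lra.
Qed.

Lemma lip_ub A f a b : A a -> A b -> a <> b ->
  Rbar_le (Rabs (f a - f b) / dM a b) (lipnorm A f).
Proof.
  intros. unfold lipnorm. destruct (Lub_Rbar_correct (fun r => exists a b, A a /\ A b /\ a <> b /\
                       r = Rabs (f a - f b) / dM a b)) as [Hub _].
  apply Hub. exists a, b. auto.
Qed.

Lemma lip_le A f L : (forall a, A a -> inM a) ->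
  (forall a b, A a -> A b -> a <> b -> Rabs (f a - f b) <= L * dM a b) ->
  Rbar_le (lipnorm A f) L.
Proof.
  intros HA H. unfold lipnorm. destruct (Lub_Rbar_correct (fun r => exists a b, A a /\ A b /\ a <> b /\
                       r = Rabs (f a - f b) / dM a b)) as [_ Hl].
  apply Hl. intros r [a [b [Ha [Hb [Hab ->]]]]]. simpl.
  apply Rle_div_l. apply dM_pos; auto. auto.
Qed.

Lemma lip_use A f L a b : (forall a, A a -> inM a) -> lipnorm A f = Finite L ->
  A a -> A b -> a <> b -> Rabs (f a - f b) <= L * dM a b.
Proof.
  intros HA HL Ha Hb Hab. pose proof (lip_ub A f a b Ha Hb Hab) as H.
  rewrite HL in H. simpl in H. apply Rle_div_l in H; auto. apply dM_pos; auto.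
Qed.

Lemma lip_use_real A f B a b : (forall a, A a -> inM a) -> Rbar_le (lipnorm A f) (Finite B) ->
  A a -> A b -> a <> b -> Rabs (f a - f b) <= real (lipnorm A f) * dM a b.
Proof.
  intros HA HB Ha Hb Hab. pose proof (lip_ub A f a b Ha Hb Hab) as H.
  destruct (lipnorm A f) eqn:E; simpl in *; try contradiction.
  apply Rle_div_l in H; auto. apply dM_pos; auto.
Qed.

Definition gfun (m : nat) (s : R) (a : pt) : R :=
  if Req_EM_T (snd a) (/ 2 ^ m) then Rmax 0 (/ 2 ^ S m - s * fst a) else 0.

Lemma Rmax_lip x y : Rabs (Rmax 0 x - Rmax 0 y) <= Rabs (x - y).
Proof. unfold Rmax; repeat destruct Rle_dec; unfold Rabs; repeat destruct Rcase_abs; lra. Qed.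

Lemma row_Sn m a : inM a -> snd a = / 2 ^ m -> Sn m a.
Proof.
  pose proof (inv2_pos m).
  intros [->|[->|[n [Hn HS]]]] E; simpl in E; try lra.
  pose proof (Sn_coord _ _ HS) as [_ E2]. rewrite E2 in E. apply inv2_inj in E. subst; auto.
Qed.

Lemma dy_M m b : inM b -> snd b <> / 2 ^ m -> / 2 ^ S m <= Rabs (/ 2 ^ m - snd b).
Proof.
  intros Hb Hne. pose proof (inv2_pos m). rewrite inv2_S.
  destruct Hb as [->|[->|[n [Hn HS]]]]; simpl.
  - rewrite Rminus_0_r, Rabs_right; lra.
  - rewrite Rminus_0_r, Rabs_right; lra.
  - pose proof (Sn_coord _ _ HS) as [_ E2]. rewrite E2 in *.
    rewrite <- inv2_S. apply dy_ge. intro; subst; auto.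
Qed.

Lemma am_M m : (1 <= m)%nat -> inM (0, / 2 ^ m).
Proof.
  intros. right; right. exists m. split; auto. exists 0%nat. split; [lia|].
  f_equal. simpl. unfold Rdiv. ring.
Qed.

Lemma am_V m : (1 <= m)%nat -> inV (0, / 2 ^ m).
Proof. intros. split; [apply am_M; auto| left; reflexivity]. Qed.

Lemma gfun_off m s a : snd a <> / 2 ^ m -> gfun m s a = 0.
Proof. intros. unfold gfun. destruct Req_EM_T; [contradiction|reflexivity]. Qed.

Lemma gfun_on m s a : snd a = / 2 ^ m -> gfun m s a = Rmax 0 (/ 2 ^ S m - s * fst a).
Proof. intros. unfold gfun. destruct Req_EM_T; [reflexivity|contradiction]. Qed.

Lemma gfun_le_t m s a : 0 <= s -> 0 <= fst a -> 0 <= gfun m s a <= / 2 ^ S m.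
Proof.
  intros. pose proof (inv2_pos (S m)). unfold gfun. destruct Req_EM_T; [|lra].
  unfold Rmax. destruct Rle_dec; try lra.
  assert (0 <= s * fst a) by (apply Rmult_le_pos; auto). lra.
Qed.

Lemma gfun_norm m s : 0 < s <= 1 -> (1 <= m)%nat -> lipnorm inM (gfun m s) = Finite 1.
Proof.
  intros Hs Hm. apply Rbar_le_antisym.
  - apply lip_le; auto. intros a b Ha Hb Hab.
    pose proof (M_coord a Ha). pose proof (M_coord b Hb).
    destruct (Req_EM_T (snd a) (/ 2 ^ m)) as [Ea|Ea];
    destruct (Req_EM_T (snd b) (/ 2 ^ m)) as [Eb|Eb].
    + rewrite !gfun_on; auto. rewrite dM_eq by congruence.
      eapply Rle_trans; [apply Rmax_lip|].
      replace (/ 2 ^ S m - s * fst a - (/ 2 ^ S m - s * fst b)) with (s * (fst b - fst a)) by ring.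
      rewrite Rabs_mult, Rabs_right, Rabs_minus_sym by lra.
      rewrite Rmult_1_l. pose proof (Rabs_pos (fst a - fst b)). nra.
    + rewrite gfun_off with (a := b), Rminus_0_r, Rmult_1_l by auto.
      pose proof (gfun_le_t m s a). pose proof (dy_M m b Hb Eb).
      pose proof (dM_ge_dy a b Ha Hb). rewrite Ea in H3.
      rewrite Rabs_right; lra.
    + rewrite gfun_off with (a := a), Rminus_0_l, Rabs_Ropp, Rmult_1_l by auto.
      pose proof (gfun_le_t m s b). pose proof (dy_M m a Ha Ea).
      pose proof (dM_ge_dy b a Hb Ha). rewrite Eb in H3. rewrite dM_sym.
      rewrite Rabs_right; lra.
    + rewrite !gfun_off by auto. rewrite Rminus_diag, Rabs_R0, Rmult_1_l.
      left; apply dM_pos; auto.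
  - assert (H := lip_ub inM (gfun m s) (0, / 2 ^ m) (0, / 2 ^ S m) (am_M m Hm) (am_M (S m) ltac:(lia))).
    assert (Hne : / 2 ^ S m <> / 2 ^ m).
    { rewrite inv2_S. pose proof (inv2_pos m). lra. }
    rewrite gfun_on, gfun_off in H by (simpl; auto). simpl fst in H.
    rewrite dM_ne in H by (simpl; auto). simpl in H.
    replace (Rabs (Rmax 0 (/ (2 * 2 ^ m) - s * 0) - 0) / (Rabs (/ 2 ^ m - / (2 * 2 ^ m)) + Rmin (0 + 0) (2 - (0 + 0)))) with 1 in H.
    apply H. intro E. inversion E. auto.
    pose proof (p2_pos m).
    rewrite Rplus_0_r, Rminus_0_r, Rmin_left by lra.
    rewrite Rmult_0_r, Rminus_0_r, Rplus_0_r, Rinv_mult.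
    assert (0 < / 2 ^ m) by (apply Rinv_0_lt_compat; lra).
    assert (0 < / 2 * / 2 ^ m) by (apply Rmult_lt_0_compat; lra).
    rewrite Rmax_right by lra. rewrite !Rabs_right by lra.
    field. lra.
Qed.

Lemma Sn_M n a : (1 <= n)%nat -> Sn n a -> inM a.
Proof. intros. right; right. exists n; auto. Qed.

Lemma gV0 m s a : / 2 ^ S m <= s -> inV a -> a <> (0, / 2 ^ m) -> gfun m s a = 0.
Proof.
  intros Hs [Ha Hx] Hne. destruct (Req_EM_T (snd a) (/ 2 ^ m)).
  - rewrite gfun_on by auto. destruct Hx as [Hx|Hx].
    + exfalso. apply Hne. destruct a; simpl in *; subst; auto.
    + rewrite Hx. unfold Rmax. destruct Rle_dec; lra.
  - apply gfun_off; auto.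
Qed.

Lemma point_dec (a b : pt) : a = b \/ a <> b.
Proof.
  destruct a as [x1 y1], b as [x2 y2].
  destruct (Req_EM_T x1 x2); destruct (Req_EM_T y1 y2); subst; auto;
  right; intro E; inversion E; auto.
Qed.

Lemma gfun_inY m s : 0 < s <= 1 -> / 2 ^ S m <= s -> (1 <= m)%nat -> inY (gfun m s).
Proof.
  intros Hs Hts Hm. pose proof (inv2_pos m). pose proof (inv2_pos (S m)).
  assert (Hq : gfun m s q0 = 0) by (apply gfun_off; simpl; lra).
  split; [split|split].
  - apply gfun_off; simpl; lra.
  - rewrite gfun_norm; simpl; auto.
  - apply is_lim_seq_ext_loc with (u := fun _ => 0); [|apply is_lim_seq_const].
    exists (S m). intros n Hn. rewrite Hq.
    assert (Hn1 : (1 <= n)%nat) by lia.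
    assert (Hyn : / 2 ^ n <> / 2 ^ m) by (intro E; apply inv2_inj in E; lia).
    assert (Hz : forall a, Sn n a -> gfun m s a - 0 * hfun a = 0).
    { intros a Ha. destruct (Sn_coord _ _ Ha) as [_ E]. rewrite gfun_off; [ring|congruence]. }
    replace (lipnorm (Sn n) (fun a => gfun m s a - 0 * hfun a)) with (Finite 0); [reflexivity|].
    apply Rbar_le_antisym.
    + assert (Hs0 : Sn n (0, / 2 ^ n)) by (exists 0%nat; split; [lia|f_equal; simpl; unfold Rdiv; ring]).
      assert (Hs1 : Sn n (1, / 2 ^ n)).
      { exists (2 ^ n)%nat. split; [lia|]. f_equal. rewrite pow_INR.
        replace (INR 2) with 2 by (simpl; lra). field. pose proof (p2_pos n); lra. }
      pose proof (lip_ub (Sn n) (fun a => gfun m s a - 0 * hfun a) _ _ Hs0 Hs1 ltac:(intro E; inversion E; lra)) as H1.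
      cbv beta in H1. rewrite (Hz _ Hs0), (Hz _ Hs1), Rminus_diag, Rabs_R0 in H1.
      unfold Rdiv in H1. rewrite Rmult_0_l in H1. exact H1.
    + apply lip_le. intros a Ha; apply (Sn_M n); auto.
      intros a b Ha Hb _. rewrite (Hz _ Ha), (Hz _ Hb), Rminus_diag, Rabs_R0, Rmult_0_l. lra.
  - intros z Hz eps' Heps'.
    destruct (point_dec z (0, / 2 ^ m)) as [Ez|Ez].
    + exists (/ 2 ^ S m). split; auto.
      assert (Hc : forall a, inV a -> dM a z < / 2 ^ S m -> a = (0, / 2 ^ m)).
      { intros a [Ha Hx] Hd. subst z.
        destruct (Req_EM_T (snd a) (/ 2 ^ m)) as [Ey|Ey].
        - rewrite dM_eq in Hd by auto. cbn [fst snd] in Hd. destruct Hx as [Hx|Hx].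
          + destruct a; simpl in *; subst; auto.
          + rewrite Hx, Rminus_0_r, Rabs_R1 in Hd. pose proof (inv2_le1 (S m)). lra.
        - pose proof (dy_M m a Ha Ey). pose proof (dM_ge_dy a (0, / 2 ^ m) Ha (am_M m Hm)).
          cbn [fst snd] in H2. rewrite Rabs_minus_sym in H2. lra. }
      intros a b Ha Hb Hab Hda Hdb. exfalso. apply Hab. rewrite (Hc a), (Hc b); auto.
    + assert (HzM : inM z) by (destruct Hz; auto).
      exists (dM (0, / 2 ^ m) z). split.
      * apply dM_pos; auto. apply am_M; auto.
      * intros a b Ha Hb Hab Hda Hdb.
        rewrite (gV0 m s a), (gV0 m s b); auto;
          try (intro E; subst; lra).
        rewrite Rminus_diag. unfold Rdiv. rewrite Rmult_0_l, Rabs_R0. lra.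
Qed.

Lemma dM_v0 y : 0 <= y -> dM (0, y) p0 = y.
Proof.
  intros Hy. destruct (Req_EM_T y 0).
  - subst. rewrite dM_eq by reflexivity. simpl. rewrite Rminus_0_r, Rabs_R0. reflexivity.
  - rewrite dM_ne by (simpl; auto). simpl. rewrite Rminus_0_r, Rabs_right by lra.
    rewrite Rplus_0_r, Rminus_0_r, Rmin_left by lra. ring.
Qed.

Lemma abs3 a b c : Rabs (a + b - c) <= Rabs a + Rabs b + Rabs c.
Proof. unfold Rabs; repeat destruct Rcase_abs; lra. Qed.

Section Main.
Variables (eps e : R) (m K : nat) (delta : R) (f : pt -> R).
Hypotheses (Heps : 0 < eps) (He : 0 < e) (He2 : 2 * e <= eps) (He1 : e <= 1/2)
  (Hf0 : f p0 = 0) (Hf1 : lipnorm inM f = Finite 1)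
  (Hrow : forall k, (K <= k)%nat -> forall a b, Sn k a -> Sn k b -> a <> b ->
     Rabs ((f a - f q0 * fst a) - (f b - f q0 * fst b)) <= e * dM a b)
  (Hdel : 0 < delta)
  (Hflat : forall a b, inV a -> inV b -> a <> b -> dM a p0 < delta -> dM b p0 < delta ->
     Rabs (f a - f b) <= e * dM a b)
  (Hm1 : (1 <= m)%nat) (HKm : (K <= m)%nat)
  (Hc1 : / 2 ^ m + / 2 ^ S m / eps <= delta) (Hc2 : / 2 ^ m + / 2 ^ S m / eps <= / 2 ^ K)
  (Hc3 : / 2 ^ S m / e <= 1/2) (Hc4 : / 2 ^ S m / eps <= 1/2).

Lemma fq_le1 : Rabs (f q0) <= 1.
Proof.
  pose proof (lip_use inM f 1 p0 q0 (fun a h => h) Hf1 ltac:(left; auto) ltac:(right; left; auto)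
    ltac:(intro E; inversion E; lra)) as H.
  rewrite dM_eq in H by reflexivity. simpl in H. rewrite Hf0 in H.
  rewrite Rminus_0_l, Rabs_Ropp in H. replace (Rabs (0 - 1)) with 1 in H. lra.
  rewrite Rminus_0_l, Rabs_Ropp, Rabs_R1. reflexivity.
Qed.

Lemma flip a b : inM a -> inM b -> a <> b -> Rabs (f a - f b) <= dM a b.
Proof. intros. rewrite <- (Rmult_1_l (dM a b)). apply (lip_use inM); auto. Qed.

Lemma row_pair k a b : (K <= k)%nat -> Sn k a -> Sn k b ->
  Rabs (f a - f b) <= (1 + e) * Rabs (fst a - fst b).
Proof.
  intros Hk Ha Hb. destruct (point_dec a b) as [<-|Hab].
  { rewrite !Rminus_diag, Rabs_R0. lra. }
  pose proof (Hrow k Hk a b Ha Hb Hab) as H.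
  rewrite dM_eq in H by (rewrite (proj2 (Sn_coord _ _ Ha)), (proj2 (Sn_coord _ _ Hb)); auto).
  replace (f a - f b) with ((f a - f q0 * fst a - (f b - f q0 * fst b)) + f q0 * (fst a - fst b)) by ring.
  eapply Rle_trans; [apply Rabs_triang|]. rewrite Rabs_mult.
  pose proof fq_le1. pose proof (Rabs_pos (fst a - fst b)). nra.
Qed.

Lemma row0 k a : (K <= k)%nat -> Sn k a -> Rabs (f a - f (0, / 2 ^ k)) <= (1 + e) * fst a.
Proof.
  intros Hk Ha. pose proof (Sn_coord _ _ Ha) as [Hx _].
  replace (fst a) with (Rabs (fst a - fst (0, / 2 ^ k))).
  apply (row_pair k); auto. exists 0%nat. split; [lia|]. f_equal. simpl. unfold Rdiv; ring.
  simpl. rewrite Rminus_0_r, Rabs_right; lra.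
Qed.

Lemma pair_one u w : inM u -> inM w -> snd u = / 2 ^ m -> snd w <> / 2 ^ m ->
  Rabs (f u - f w) + gfun m e u <= (1 + eps) * dM u w.
Proof.
  intros Hu Hw Eu Ew.
  pose proof (inv2_pos m) as Hym. pose proof (inv2_pos (S m)) as Ht.
  assert (Huw : u <> w) by (intro; subst; auto).
  pose proof (flip u w Hu Hw Huw) as Hfl.
  pose proof (dM_pos u w Hu Hw Huw) as Hd.
  destruct (M_coord u Hu) as [Hxu _]. destruct (M_coord w Hw) as [Hxw Hyw].
  rewrite gfun_on by auto.
  destruct (Rle_dec (/ 2 ^ S m - e * fst u) 0) as [Hg|Hg].
  { rewrite Rmax_left by lra. nra. }
  rewrite Rmax_right by lra.
  assert (Hxu2 : fst u < / 2 ^ S m / e).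
  { apply Rmult_lt_reg_r with e; auto. unfold Rdiv. rewrite Rmult_assoc, Rinv_l by lra. lra. }
  set (r := / 2 ^ S m / eps) in *.
  assert (Htr : / 2 ^ S m = eps * r) by (unfold r, Rdiv; rewrite (Rmult_comm eps), Rmult_assoc, Rinv_l by lra; ring).
  destruct (Rle_dec r (dM u w)) as [Hfar|Hclose].
  { assert (eps * r <= eps * dM u w) by (apply Rmult_le_compat_l; lra).
    assert (0 <= e * fst u) by (apply Rmult_le_pos; lra). lra. }
  apply Rnot_le_lt in Hclose.
  pose proof (dy_M m w Hw Ew) as Hdy. rewrite <- Eu in Hdy.
  pose proof (dM_ne u w ltac:(congruence)) as Ed.
  set (dy := Rabs (snd u - snd w)) in *.
  assert (HA : Rmin (fst u + fst w) (2 - (fst u + fst w)) = fst u + fst w).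
  { destruct (Rle_dec (fst u + fst w) (2 - (fst u + fst w))).
    - apply Rmin_left; auto.
    - rewrite Rmin_right in Ed by lra. pose proof (Rabs_pos (snd u - snd w)). fold dy in H. lra. }
  rewrite HA in Ed.
  assert (Hr0 : 0 <= dy) by apply Rabs_pos.
  assert (Hyw2 : snd w < / 2 ^ m + r).
  { assert (snd w <= snd u + dy) by (unfold dy; rewrite Rabs_minus_sym; unfold Rabs; destruct Rcase_abs; lra). lra. }
  assert (Hv : inV (0, snd w) /\ Rabs (f w - f (0, snd w)) <= (1 + e) * fst w).
  { destruct Hw as [->|[->|[k [Hk HS]]]].
    - simpl. split. split; [left; auto| left; auto]. rewrite Rminus_diag, Rabs_R0. lra.
    - exfalso. simpl in Ed. lra.
    - pose proof (Sn_coord _ _ HS) as [_ Ek]. rewrite Ek in *. split. apply am_V; auto.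
      apply row0; auto. destruct (Nat.le_gt_cases K k) as [|Hlt]; auto.
      exfalso. pose proof (inv2_mono k K ltac:(lia)). lra. }
  destruct Hv as [HvV Hwv].
  assert (Hvp : dM (0, snd w) p0 < delta) by (rewrite dM_v0; lra).
  assert (Hamp : dM (0, / 2 ^ m) p0 < delta) by (rewrite dM_v0; lra).
  assert (Hne : (0, / 2 ^ m) <> (0, snd w)) by (intro E; inversion E; auto).
  pose proof (Hflat _ _ (am_V m Hm1) HvV Hne Hamp Hvp) as Hf2.
  rewrite dM_ne in Hf2 by (simpl; auto). simpl in Hf2.
  rewrite Rplus_0_r, Rminus_0_r, Rmin_left, Rplus_0_r in Hf2 by lra. replace (Rabs (/ 2 ^ m - snd w)) with dy in Hf2 by (unfold dy; rewrite Eu; reflexivity).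
  assert (Hu0 : Rabs (f u - f (0, / 2 ^ m)) <= (1 + e) * fst u).
  { apply row0; auto. apply row_Sn; auto. }
  assert (Htot : Rabs (f u - f w) <= (1 + e) * fst u + e * dy + (1 + e) * fst w).
  { replace (f u - f w) with ((f u - f (0, / 2 ^ m)) + (f (0, / 2 ^ m) - f (0, snd w)) - (f w - f (0, snd w))) by ring.
    eapply Rle_trans; [apply abs3|]. lra. }
  rewrite Ed.
  assert (0 <= (eps - e) * fst u) by (apply Rmult_le_pos; lra).
  assert (0 <= (eps - e) * fst w) by (apply Rmult_le_pos; lra).
  assert (0 <= (eps - e) * dy) by (apply Rmult_le_pos; lra).
  assert (0 <= e * fst u) by (apply Rmult_le_pos; lra).
  nra.
Qed.

Lemma pair_bound u w : inM u -> inM w -> u <> w ->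
  Rabs (f u - f w) + Rabs (gfun m e u - gfun m e w) <= (1 + eps) * dM u w.
Proof.
  intros Hu Hw Huw.
  pose proof (flip u w Hu Hw Huw) as Hfl.
  pose proof (dM_pos u w Hu Hw Huw) as Hd.
  destruct (M_coord u Hu) as [Hxu _]. destruct (M_coord w Hw) as [Hxw _].
  destruct (Req_EM_T (snd u) (/ 2 ^ m)) as [Eu|Eu];
  destruct (Req_EM_T (snd w) (/ 2 ^ m)) as [Ew|Ew].
  - rewrite !gfun_on by auto. rewrite dM_eq in * by congruence.
    pose proof (row_pair m u w HKm (row_Sn m u Hu Eu) (row_Sn m w Hw Ew)).
    pose proof (Rmax_lip (/ 2 ^ S m - e * fst u) (/ 2 ^ S m - e * fst w)).
    replace (/ 2 ^ S m - e * fst u - (/ 2 ^ S m - e * fst w)) with (e * (fst w - fst u)) in H0 by ring.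
    rewrite Rabs_mult, (Rabs_right e), (Rabs_minus_sym (fst w)) in H0 by lra.
    pose proof (Rabs_pos (fst u - fst w)). assert (0 <= (eps - 2 * e) * Rabs (fst u - fst w)) by (apply Rmult_le_pos; lra). nra.
  - rewrite (gfun_off m e w), Rminus_0_r by auto.
    destruct (gfun_le_t m e u ltac:(lra) ltac:(lra)) as [G1 G2].
    rewrite (Rabs_right (gfun m e u)) by lra.
    apply pair_one; auto.
  - rewrite (gfun_off m e u), Rminus_0_l, Rabs_Ropp by auto.
    destruct (gfun_le_t m e w ltac:(lra) ltac:(lra)) as [G1 G2].
    rewrite (Rabs_right (gfun m e w)) by lra.
    rewrite Rabs_minus_sym, dM_sym. apply pair_one; auto.
  - rewrite !gfun_off by auto. rewrite Rminus_diag, Rabs_R0. nra.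
Qed.

End Main.

Lemma INR_le_pow2 n : INR n <= 2 ^ n.
Proof.
  induction n. simpl; lra. rewrite S_INR. simpl.
  pose proof (pow_R1_Rle 2 n ltac:(lra)). lra.
Qed.

Lemma decay C D : 0 < D -> exists M0, forall m, (M0 <= m)%nat -> C * / 2 ^ m < D.
Proof.
  intros HD. destruct (Rle_lt_dec C 0) as [HC|HC].
  { exists 0%nat. intros m _. pose proof (inv2_pos m). nra. }
  destruct (archimed (C / D)) as [H1 _].
  assert (0 <= IZR (up (C / D))).
  { assert (0 < C / D) by (apply Rdiv_lt_0_compat; lra). lra. }
  exists (Z.to_nat (up (C / D))). intros m Hm.
  apply le_INR in Hm. rewrite INR_IZR_INZ, Z2Nat.id in Hm.
  2: { apply le_IZR. lra. }
  pose proof (INR_le_pow2 m). pose proof (p2_pos m).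
  apply Rmult_lt_reg_r with (2 ^ m); auto.
  rewrite Rmult_assoc, Rinv_l by lra. rewrite Rmult_1_r.
  assert (C / D < 2 ^ m) by lra.
  apply Rmult_lt_reg_r with (/ D). apply Rinv_0_lt_compat; lra.
  replace (D * 2 ^ m * / D) with (2 ^ m) by (field; lra). exact H3.
Qed.

Lemma combine (P : nat -> nat -> Prop) N :
  (forall i, (i < N)%nat -> exists M0, forall m, (M0 <= m)%nat -> P i m) ->
  exists M0, forall i m, (i < N)%nat -> (M0 <= m)%nat -> P i m.
Proof.
  induction N; intros H.
  - exists 0%nat. intros; lia.
  - destruct IHN as [M1 H1]. { intros; apply H; lia. }
    destruct (H N) as [M2 H2]; [lia|]. exists (max M1 M2). intros i m Hi Hm.
    destruct (Nat.eq_dec i N). subst; apply H2; lia. apply H1; lia.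
Qed.

Lemma rhs_eq eps m : 0 < eps -> / 2 ^ m + / 2 ^ S m / eps = (1 + / (2 * eps)) * / 2 ^ m.
Proof. intros. rewrite inv2_S. pose proof (p2_pos m). field. repeat split; lra. Qed.

Lemma Rabs_div_le x y e : 0 < y -> Rabs (x / y) <= e -> Rabs x <= e * y.
Proof.
  intros Hy H. unfold Rdiv in H. rewrite Rabs_mult, Rabs_inv, (Rabs_right y) in H by lra.
  apply Rle_div_l in H; auto.
Qed.

Theorem proposition2p6 :
  forall (N : nat) (fs : nat -> pt -> R),
    (forall i, (i < N)%nat -> inY (fs i) /\ lipnorm inM (fs i) = Finite 1) ->
    forall eps : R, 0 < eps ->
    exists g : pt -> R,
      inY g /\ lipnorm inM g = Finite 1 /\
      forall i, (i < N)%nat ->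
        Rbar_le (lipnorm inM (fun a => fs i a + g a)) (Finite (1 + eps)) /\
        Rbar_le (lipnorm inM (fun a => fs i a - g a)) (Finite (1 + eps)).
Proof.
  intros N fs Hfs eps Heps.
  set (e := Rmin eps 1 / 2).
  assert (He : 0 < e /\ 2 * e <= eps /\ e <= 1 / 2).
  { unfold e. pose proof (Rmin_l eps 1). pose proof (Rmin_r eps 1).
    assert (0 < Rmin eps 1) by (apply Rmin_glb_lt; lra). lra. }
  destruct He as [He0 [He2 He1]].
  set (P := fun i m => exists K delta,
     (forall k, (K <= k)%nat -> forall a b, Sn k a -> Sn k b -> a <> b ->
       Rabs ((fs i a - fs i q0 * fst a) - (fs i b - fs i q0 * fst b)) <= e * dM a b) /\
     0 < delta /\
     (forall a b, inV a -> inV b -> a <> b -> dM a p0 < delta -> dM b p0 < delta ->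
       Rabs (fs i a - fs i b) <= e * dM a b) /\
     (K <= m)%nat /\ / 2 ^ m + / 2 ^ S m / eps <= delta /\ / 2 ^ m + / 2 ^ S m / eps <= / 2 ^ K).
  destruct (combine P N) as [M0 HM0].
  { intros i Hi. destruct (Hfs i Hi) as [[[Hf0 _] [Hlim Hflat]] Hn].
    set (f := fs i) in *.
    apply is_lim_seq_spec in Hlim. destruct (Hlim (mkposreal e He0)) as [N1 HN1]. simpl in HN1.
    set (K := max N1 1).
    assert (Hrow : forall k, (K <= k)%nat -> forall a b, Sn k a -> Sn k b -> a <> b ->
       Rabs ((f a - f q0 * fst a) - (f b - f q0 * fst b)) <= e * dM a b).
    { intros k Hk a b Ha Hb Hab.
      assert (HSM : forall a, Sn k a -> inM a) by (intros; apply (Sn_M k); auto; lia).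
      assert (Hq1 : Rabs (f q0) <= 1) by (apply (fq_le1 f); auto).
      assert (Hle2 : Rbar_le (lipnorm (Sn k) (fun a => f a - f q0 * hfun a)) (Finite 2)).
      { apply lip_le; auto. intros x y Hx Hy Hxy.
        pose proof (lip_use inM f 1 x y (fun a h => h) Hn (HSM x Hx) (HSM y Hy) Hxy).
        assert (Ed : dM x y = Rabs (fst x - fst y)).
        { apply dM_eq. rewrite (proj2 (Sn_coord _ _ Hx)), (proj2 (Sn_coord _ _ Hy)); auto. }
        unfold hfun. replace (f x - f q0 * fst x - (f y - f q0 * fst y)) with
          ((f x - f y) - f q0 * (fst x - fst y)) by ring.
        eapply Rle_trans; [apply Rabs_triang|]. rewrite Rabs_Ropp, Rabs_mult, <- Ed.
        pose proof (dM_pos x y (HSM x Hx) (HSM y Hy) Hxy). nra. }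
      pose proof (lip_use_real (Sn k) (fun a => f a - f q0 * hfun a) 2 a b HSM Hle2 Ha Hb Hab) as H.
      pose proof (HN1 k ltac:(lia)) as H2. rewrite Rminus_0_r in H2.
      apply Rabs_def2 in H2. pose proof (dM_pos a b (HSM a Ha) (HSM b Hb) Hab).
      unfold hfun in *. nra. }
    destruct (Hflat p0 ltac:(split; [left; auto | left; auto]) e He0) as [delta [Hdel Hfl]].
    assert (Hfl2 : forall a b, inV a -> inV b -> a <> b -> dM a p0 < delta -> dM b p0 < delta ->
       Rabs (f a - f b) <= e * dM a b).
    { intros a b Ha Hb Hab Ha' Hb'. apply Rabs_div_le. apply dM_pos; auto.
      destruct Ha; auto. destruct Hb; auto. apply Hfl; auto. }
    destruct (decay (1 + / (2 * eps)) delta Hdel) as [Ma HMa].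
    destruct (decay (1 + / (2 * eps)) (/ 2 ^ K) (inv2_pos K)) as [Mb HMb].
    exists (max K (max Ma Mb)). intros m Hm. exists K, delta.
    repeat split; auto; try lia; rewrite rhs_eq by auto; left.
    apply HMa; lia. apply HMb; lia. }
  destruct (decay (/ (2 * e)) (1/2) ltac:(lra)) as [Ma HMa].
  destruct (decay (/ (2 * eps)) (1/2) ltac:(lra)) as [Mb HMb].
  destruct (decay (/ 2) e He0) as [Mc HMc].
  set (m := max M0 (max Ma (max Mb (max Mc 1)))).
  assert (Hm1 : (1 <= m)%nat) by lia.
  assert (Hts : / 2 ^ S m <= e) by (rewrite inv2_S; unfold Rdiv; rewrite Rmult_comm; left; apply HMc; lia).
  assert (Hc3 : / 2 ^ S m / e <= 1 / 2).
  { left. replace (/ 2 ^ S m / e) with (/ (2 * e) * / 2 ^ m). apply HMa; lia.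
    rewrite inv2_S. pose proof (p2_pos m). field. repeat split; lra. }
  assert (Hc4 : / 2 ^ S m / eps <= 1 / 2).
  { left. replace (/ 2 ^ S m / eps) with (/ (2 * eps) * / 2 ^ m). apply HMb; lia.
    rewrite inv2_S. pose proof (p2_pos m). field. repeat split; lra. }
  exists (gfun m e). split; [|split].
  - apply gfun_inY; auto; lra.
  - apply gfun_norm; auto; lra.
  - intros i Hi. destruct (Hfs i Hi) as [[[Hf0 _] _] Hn].
    destruct (HM0 i m Hi ltac:(lia)) as [K [delta [Hrow [Hdel [Hfl [HKm [Hc1 Hc2]]]]]]].
    pose proof (pair_bound eps e m K delta (fs i) Heps He0 He2 He1 Hf0 Hn Hrow Hfl Hm1 HKm Hc1 Hc2 Hc3 Hc4) as HB.
    split; apply lip_le; auto; intros a b Ha Hb Hab; pose proof (HB a b Ha Hb Hab);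
      [replace (fs i a + gfun m e a - (fs i b + gfun m e b)) with ((fs i a - fs i b) + (gfun m e a - gfun m e b)) by ring
      |replace (fs i a - gfun m e a - (fs i b - gfun m e b)) with ((fs i a - fs i b) - (gfun m e a - gfun m e b)) by ring];
      [eapply Rle_trans; [apply Rabs_triang|]; lra
      |eapply Rle_trans; [apply Rabs_triang|]; rewrite Rabs_Ropp; lra].
Qed.
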